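(* Let $S_3$ be the simple undirected graph on vertex set $\{1,2,\dots,16\}$ whose edges are the path edges $\{j,j+1\}$ for $j=1,\dots,15$ together with the five edges $\{1,5\},\{1,13\},\{3,12\},\{4,8\},\{9,16\}$. Designate incoming vertices $i_1=1,\ i_2=6,\ i_3=8$ and outgoing vertices $o_1=16,\ o_2=11,\ o_3=14$. Let $G$ be any finite simple undirected graph that contains $S_3$ as an induced subgraph, has at least one vertex not in $S_3$, and is such that every edge of $G$ joining a vertex of $S_3$ to a vertex outside $S_3$ has its endpoint in $S_3$ belonging to $\{i_1,i_2,i_3,o_1,o_2,o_3\}$. Then for every Hamiltonian cycle $H$ of $G$, the edges of $H$ having both endpoints in $S_3$ form a single path that visits every vertex of $S_3$ (i.e. $H$ enters $S_3$ exactly once, traverses all of it, and leaves), and the two endpoints of this path are $i_k$ and $o_k$ for some $k\in\{1,2,3\}$.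
   Context: A Hamiltonian cycle of a graph is a cycle passing through every vertex exactly once. This is the ''in-out property'' for the subgraph $S_3$: each copy of it behaves like a single vertex in any Hamiltonian cycle, and a cycle entering at the $k$-th incoming vertex must leave at the $k$-th outgoing vertex. *)

(* Defs.v *)
From mathcomp Require Import all_boot.
Set Implicit Arguments. Unset Strict Implicit. Unset Printing Implicit Defensive.

(* Vertices of S_3 are 'I_16; vertex a : 'I_16 stands for the paper's vertex a+1. *)

Definition s3edge (u v : nat) : bool :=
  ((v == u.+1) && (1 <= u <= 15))
  || ((u, v) \in [:: (1, 5); (1, 13); (3, 12); (4, 8); (9, 16)]).

Definition S3adj (a b : 'I_16) : bool := s3edge a.+1 b.+1 || s3edge b.+1 a.+1.

(* incoming vertices i_1=1, i_2=6, i_3=8 ; outgoing o_1=16, o_2=11, o_3=14;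
   k : 'I_3 stands for index k+1 *)
Definition S3in (k : 'I_3) : 'I_16 := inord (nth 0 [:: 1; 6; 8] k).-1.
Definition S3out (k : 'I_3) : 'I_16 := inord (nth 0 [:: 16; 11; 14] k).-1.

Definition S3terminal (a : 'I_16) : bool :=
  [exists k : 'I_3, (a == S3in k) || (a == S3out k)].

Definition hamiltonian_cycle (T : finType) (e : rel T) (c : seq T) : Prop :=
  [/\ uniq c, (forall x, x \in c), cycle e c & 3 <= size c].

Definition cycle_edge (T : eqType) (c : seq T) (x y : T) : bool :=
  [&& x \in c, y \in c & (next c x == y) || (next c y == x)].

Definition path_edge (A : eqType) (p : seq A) (a b : A) : bool :=
  ((a, b) \in zip p (behead p)) || ((b, a) \in zip p (behead p)).

(* Main.v *)
Require Import Defs.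
From mathcomp Require Import all_boot.
Set Implicit Arguments. Unset Strict Implicit. Unset Printing Implicit Defensive.
Definition edges : seq (nat*nat) := [:: (0,1); (1,2); (2,3); (3,4); (4,5); (5,6); (6,7); (7,8); (8,9); (9,10); (10,11); (11,12); (12,13); (13,14); (14,15); (0,4); (0,12); (2,11); (3,7); (8,15)].
Definition tbl : seq (seq nat) := [:: [:: 20; 0; 20; 20; 15; 20; 20; 20; 20; 20; 20; 20; 16; 20; 20; 20]; [:: 0; 20; 1; 20; 20; 20; 20; 20; 20; 20; 20; 20; 20; 20; 20; 20]; [:: 20; 1; 20; 2; 20; 20; 20; 20; 20; 20; 20; 17; 20; 20; 20; 20]; [:: 20; 20; 2; 20; 3; 20; 20; 18; 20; 20; 20; 20; 20; 20; 20; 20]; [:: 15; 20; 20; 3; 20; 4; 20; 20; 20; 20; 20; 20; 20; 20; 20; 20]; [:: 20; 20; 20; 20; 4; 20; 5; 20; 20; 20; 20; 20; 20; 20; 20; 20]; [:: 20; 20; 20; 20; 20; 5; 20; 6; 20; 20; 20; 20; 20; 20; 20; 20]; [:: 20; 20; 20; 18; 20; 20; 6; 20; 7; 20; 20; 20; 20; 20; 20; 20]; [:: 20; 20; 20; 20; 20; 20; 20; 7; 20; 8; 20; 20; 20; 20; 20; 19]; [:: 20; 20; 20; 20; 20; 20; 20; 20; 8; 20; 9; 20; 20; 20; 20; 20]; [:: 20; 20; 20; 20; 20; 20; 20; 20; 20; 9; 20; 10; 20; 20; 20; 20]; [:: 20; 20; 17; 20; 20; 20; 20; 20; 20; 20;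 10; 20; 11; 20; 20; 20]; [:: 16; 20; 20; 20; 20; 20; 20; 20; 20; 20; 20; 11; 20; 12; 20; 20]; [:: 20; 20; 20; 20; 20; 20; 20; 20; 20; 20; 20; 20; 12; 20; 13; 20]; [:: 20; 20; 20; 20; 20; 20; 20; 20; 20; 20; 20; 20; 20; 13; 20; 14]; [:: 20; 20; 20; 20; 20; 20; 20; 20; 19; 20; 20; 20; 20; 20; 14; 20]].
Definition idxn (a b : nat) : nat := nth 20 (nth [::] tbl a) b.
Definition Rn (m : seq bool) (a b : nat) : bool := nth false m (idxn a b).
Definition isterm (a : nat) : bool := [|| a == 0, a == 5, a == 7, a == 15, a == 10 | a == 13].
Definition okd (a d : nat) : bool := if isterm a then d <= 2 else d == 2.
Definition incs : seq (seq nat) := Eval vm_compute in [seq [seq i <- r | i < 20] | r <- tbl].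
Definition inc (a : nat) : seq nat := nth [::] incs a.
Definition degv (m : seq bool) (a : nat) : nat := count (nth false m) (inc a).
Definition deg_ok (m : seq bool) : bool := all (fun a => okd a (degv m a)) (iota 0 16).
Definition nbW (m : seq bool) (W : seq nat) (a : nat) : nat :=
  count (fun b => (b \in W) && Rn m a b) (iota 0 16).
Fixpoint prune (n : nat) (m : seq bool) (W : seq nat) : seq nat :=
  match n with 0 => W | n'.+1 => prune n' m [seq a <- W | 2 <= nbW m W a] end.
Definition cyc_ok (m : seq bool) : bool :=
  let W := prune 16 m (iota 0 16) in
  [&& W != [::], all (fun a => a < 16) W & all (fun a => 2 <= nbW m W a) W].
Definition cands : seq (nat * seq nat) :=
  [:: (0, [:: 0; 1; 2; 3; 4; 5; 6; 7; 8; 9; 10; 11; 12; 13; 14; 15]);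
      (2, [:: 7; 6; 5; 4; 3; 2; 1; 0; 12; 11; 10; 9; 8; 15; 14; 13]);
      (1, [:: 5; 6; 7; 3; 4; 0; 1; 2; 11; 12; 13; 14; 15; 8; 9; 10])].
Definition valid (m : seq bool) (kp : nat * seq nat) : bool :=
  [&& kp.1 < 3, uniq kp.2, size kp.2 == 16, all (fun a => a < 16) kp.2,
   head 0 kp.2 == (nth 0 [:: 1; 6; 8] kp.1).-1, last 0 kp.2 == (nth 0 [:: 16; 11; 14] kp.1).-1
   & all (fun a => all (fun b => Rn m a b == path_edge kp.2 a b) (iota 0 16)) (iota 0 16)].
Definition Pm (m : seq bool) : bool := if deg_ok m then (if cyc_ok m then true else has (valid m) cands) else true.
Definition bad (n : nat) (acc : seq bool) : bool :=
  has (fun a => all (fun i => n <= i) (inc a) && ~~ okd a (count (fun i => nth false acc (i - n)) (inc a))) (iota 0 16).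
Fixpoint allm (n : nat) (acc : seq bool) : bool :=
  if bad n acc then true else
  match n with 0 => Pm acc | n'.+1 => allm n' (true :: acc) && allm n' (false :: acc) end.

Lemma big_check : allm 20 [::].
Proof. vm_compute. reflexivity. Qed.

Lemma badP n acc s : bad n acc -> size s = n -> deg_ok (s ++ acc) = false.
Proof.
case/hasP => a Ha /andP [Hge Hnok] Hs.
apply/negbTE/negP => /allP /(_ a Ha); rewrite /degv.
have -> : count (nth false (s ++ acc)) (inc a)
          = count (fun i => nth false acc (i - n)) (inc a).
  by apply: eq_in_count => i /(allP Hge) Hi /=; rewrite nth_cat Hs ltnNge Hi.
by rewrite (negbTE Hnok).
Qed.

Lemma allmP n acc : allm n acc -> forall s, size s = n -> Pm (s ++ acc).
Proof.
elim: n acc => [|n IH] acc /=.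
  case: ifP => Hb H s Hs.
    by rewrite /Pm (badP Hb Hs).
  by move/size0nil: Hs => ->.
case: ifP => Hb H s Hs.
  by rewrite /Pm (badP Hb Hs).
move/andP: H => [H1 H2].
case/lastP: s Hs => [|s' b] //; rewrite size_rcons => -[Hs'].
rewrite cat_rcons; case: b; [exact: IH H1 _ Hs' | exact: IH H2 _ Hs'].
Qed.

Lemma Cidx_b : all (fun a => all (fun b => (s3edge a.+1 b.+1 || s3edge b.+1 a.+1) ==> (idxn a b < 20)) (iota 0 16)) (iota 0 16).
Proof. vm_compute. reflexivity. Qed.
Lemma Cedge_b : all (fun a => all (fun b => (idxn a b < 20) ==> (nth (0,0) edges (idxn a b) \in [:: (a,b); (b,a)])) (iota 0 16)) (iota 0 16).
Proof. vm_compute. reflexivity. Qed.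
Lemma Crow_b : all (fun a => (map (idxn a) (iota 0 16) == nth [::] tbl a) && (inc a == [seq i <- nth [::] tbl a | i < 20])) (iota 0 16).
Proof. vm_compute. reflexivity. Qed.

Lemma iota16 (a : 'I_16) : val a \in iota 0 16.
Proof. by rewrite mem_iota add0n ltn_ord. Qed.

Lemma Cidx (a b : 'I_16) : S3adj a b -> idxn a b < 20.
Proof. by have := allP (allP Cidx_b _ (iota16 a)) _ (iota16 b) => /implyP. Qed.

Lemma Cedge (a b : 'I_16) : idxn a b < 20 -> nth (0,0) edges (idxn a b) \in [:: (val a, val b); (val b, val a)].
Proof. by have := allP (allP Cedge_b _ (iota16 a)) _ (iota16 b) => /implyP. Qed.

Lemma count_ord (P : pred nat) : count P (iota 0 16) = count (fun b : 'I_16 => P (val b)) (enum 'I_16).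
Proof. by rewrite -val_enum_ord count_map. Qed.

Lemma Sterm (a : 'I_16) : S3terminal a -> isterm a.
Proof.
case/existsP => k; rewrite /S3in /S3out.
by case: k => [[|[|[|//]]] Hk] /=; case/orP => /eqP ->; rewrite inordK.
Qed.

Lemma zip_map2 (A B : Type) (g : A -> B) (s1 s2 : seq A) :
  map (fun x => (g x.1, g x.2)) (zip s1 s2) = zip (map g s1) (map g s2).
Proof. by elim: s1 s2 => [|x s1 IH] [|y s2] //=; rewrite IH. Qed.

Lemma pe_val (P : seq 'I_16) (a b : 'I_16) : path_edge P a b = path_edge (map val P) (val a) (val b).
Proof.
have inj : injective (fun x : 'I_16 * 'I_16 => (val x.1, val x.2)).
  by move=> [x1 x2] [y1 y2] /= [/val_inj -> /val_inj ->].
rewrite /path_edge behead_map -zip_map2.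
by congr orb; apply/esym; exact: (mem_map inj _ (_, _)).
Qed.

Lemma comb (R : rel 'I_16) :
  (forall a b, R a b = R b a) ->
  (forall a b, R a b -> S3adj a b) ->
  (forall a s, uniq s -> all (R a) s -> size s <= 2) ->
  (forall a, ~~ S3terminal a -> exists b1 b2, [/\ b1 != b2, R a b1 & R a b2]) ->
  (forall W : seq 'I_16, W != [::] ->
     (forall a, a \in W -> exists b1 b2, [/\ b1 \in W, b2 \in W, b1 != b2, R a b1 & R a b2]) -> False) ->
  exists k : 'I_3, exists p : seq 'I_16,
    [/\ uniq p, size p = 16, head ord0 p = S3in k, last ord0 p = S3out k
      & forall a b : 'I_16, R a b = path_edge p a b].
Proof.
move=> Rsym Radj F1 F2 F3.
set m := [seq R (inord x.1) (inord x.2) | x <- edges].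
have sm : size m = 20 by rewrite size_map.
have HR : forall a b : 'I_16, Rn m a b = R a b.
  move=> a b; rewrite /Rn; case: (ltnP (idxn a b) 20) => H.
    rewrite (nth_map (0,0)) //; move: (Cedge H).
    case: nth => u v; rewrite !inE => /orP [] /eqP [-> ->]; rewrite !inord_val // Rsym.
  rewrite nth_default ?sm //; by apply/esym/negP => /Radj /Cidx; rewrite ltnNge H.
have Hdeg : forall a : 'I_16, degv m a = count (R a) (enum 'I_16).
  move=> a; have /andP [/eqP Hr /eqP Hi] := allP Crow_b _ (iota16 a).
  rewrite /degv Hi count_filter.
  rewrite (@eq_count _ _ (nth false m)); last first.
    move=> i /=; case: (ltnP i 20) => Hi20; first by rewrite andbT.
    by rewrite andbF nth_default ?sm.
  rewrite -Hr count_map -[X in count _ X]val_enum_ord count_map.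
  by apply: eq_count => b /=; rewrite -HR.
have Hdok : deg_ok m.
  apply/allP => x; rewrite mem_iota add0n => Hx.
  pose a := Ordinal Hx; rewrite -[x]/(val a) /okd Hdeg.
  have le2 : count (R a) (enum 'I_16) <= 2.
    by rewrite -size_filter; apply: F1; [rewrite filter_uniq ?enum_uniq | apply: filter_all].
  case: ifP => // Ht.
  have [b1 [b2 [Hb Hb1 Hb2]]] : exists b1 b2, [/\ b1 != b2, R a b1 & R a b2].
    by apply: F2; apply/negP => /Sterm; rewrite Ht.
  rewrite eqn_leq le2 /= -size_filter.
  apply: (@leq_trans (size [:: b1; b2])) => //.
  apply: uniq_leq_size; first by rewrite /= inE Hb.
  by move=> z; rewrite !inE mem_filter mem_enum andbT => /orP [] /eqP ->.
have P := allmP big_check sm; rewrite cats0 /Pm Hdok in P.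
move: P; case: ifP => [Hc _ | _ Hv].
  exfalso; move: Hc; rewrite /cyc_ok; move: (prune _ _ _) => W /and3P [HW0 HW16 HW2].
  apply: (F3 (map inord W)); first by move: HW0; case: (W).
  move=> a /mapP [x Hx ->].
  have Hx16 : x < 16 := allP HW16 x Hx.
  have := allP HW2 x Hx; rewrite /nbW count_ord -size_filter.
  have vx : val (inord x : 'I_16) = x := inordK Hx16.
  have Fu : uniq [seq b : 'I_16 <- enum 'I_16 | (val b \in W) && Rn m x b].
    by rewrite filter_uniq ?enum_uniq.
  have Fm : forall b, b \in [seq b : 'I_16 <- enum 'I_16 | (val b \in W) && Rn m x b] ->
       (b \in map inord W) && R (inord x) b.
    move=> b; rewrite mem_filter => /andP [/andP [H1 H2] _].
    rewrite -{1}vx HR in H2; rewrite H2 andbT.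
    by apply/mapP; exists (val b); rewrite ?inord_val.
  move: Fu Fm; case: [seq b <- _ | _] => [|b1 [|b2 r]] // Fu Fm _.
  exists b1, b2.
  have /andP [Hb1 Rb1] := Fm b1 (mem_head _ _).
  have /andP [Hb2 Rb2] : (b2 \in map inord W) && R (inord x) b2.
    by apply: Fm; rewrite !inE eqxx orbT.
  split=> //; move: Fu => /= /andP [Hn _]; apply/eqP => E; move: Hn; rewrite E !inE eqxx //.
case/hasP: Hv => [[kn [|x0 pn]]] _ /andP [Hk /andP [Hu /andP [Hs /andP [Hall /andP [Hh /andP [Hl Hed]]]]]];
  first by move: Hs.
have Hin : {in x0 :: pn &, injective (fun x => (inord x : 'I_16))}.
  move=> x y /(allP Hall) hx /(allP Hall) hy /(congr1 (@nat_of_ord 16)).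
  by rewrite !inordK.
have vv : map val (map (fun x => (inord x : 'I_16)) (x0 :: pn)) = x0 :: pn.
  rewrite -map_comp -[RHS]map_id; apply/eq_in_map => x /(allP Hall) hx /=.
  exact: inordK hx.
exists (inord kn), (map inord (x0 :: pn)); split.
- by rewrite map_inj_in_uniq.
- by rewrite size_map; apply/eqP.
- by rewrite /S3in /= inordK //; move/eqP: Hh => /= ->.
- rewrite /S3out inordK //= last_map; move/eqP: Hl => /= ->; done.
- move=> a b; rewrite pe_val vv -HR.
  have := allP (allP Hed _ (iota16 a)) _ (iota16 b).
  by move/eqP.
Qed.

Lemma path_imp (T : eqType) (P : pred T) x t :
  path (fun a b => P a ==> P b) x t -> P x -> all P t.
Proof.
elim: t x => [|y t IH] x //= /andP [Hxy Hp] Px.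
have Py : P y by move/implyP: Hxy; apply.
by rewrite Py (IH y Hp Py).
Qed.

Lemma next_closed (T : eqType) (c : seq T) (P : pred T) x :
  uniq c -> (forall z, z \in c -> P z -> P (next c z)) -> x \in c -> P x ->
  forall z, z \in c -> P z.
Proof.
move=> Hu Hcl Hx Px.
have Hc : cycle (fun a b => P a ==> P b) c.
  by apply: (cycle_from_next Hu) => z Hz; apply/implyP; apply: Hcl.
case/rot_to: Hx => i s Hrot.
move: Hc; rewrite -(rot_cycle i) Hrot /= => Hp.
have := path_imp Hp Px; rewrite all_rcons => /andP [_ Hs] z.
rewrite -(mem_rot i) Hrot inE => /orP [/eqP -> //|Hz].
exact: (allP Hs).
Qed.

Lemma next_neq_prev (T : eqType) (c : seq T) x :
  uniq c -> 3 <= size c -> x \in c -> next c x != prev c x.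
Proof.
move=> Hu Hs Hx; apply/eqP => E.
have N2 : next c (next c x) = x by rewrite {1}E next_prev.
case/rot_to: Hx => i s Hrot.
have Hu' : uniq (x :: s) by rewrite -Hrot rot_uniq.
have Hs' : 3 <= size (x :: s) by rewrite -Hrot size_rot.
rewrite -!(next_rot i Hu) Hrot in N2.
clear Hrot; case: s Hu' Hs' N2 => [|y [|w t]] // Hu' _.
rewrite /= eqxx.
move: Hu'; rewrite /= !inE !negb_or => /andP [/and3P [Hxy Hxw _] /andP [Hyw _]].
rewrite eq_sym (negbTE Hxy) eqxx => E'.
by move: Hxw; rewrite E' eqxx.
Qed.

Theorem mainTheorem1 (T : finType) (e : rel T) (f : 'I_16 -> T) :
  symmetric e -> irreflexive e ->
  injective f ->
  (forall a b : 'I_16, e (f a) (f b) = S3adj a b) ->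
  (exists y : T, y \notin codom f) ->
  (forall (a : 'I_16) (y : T), y \notin codom f -> e (f a) y -> S3terminal a) ->
  forall c : seq T, hamiltonian_cycle e c ->
  exists k : 'I_3, exists p : seq 'I_16,
    [/\ uniq p, size p = 16, head ord0 p = S3in k, last ord0 p = S3out k
      & forall a b : 'I_16, cycle_edge c (f a) (f b) = path_edge p a b].
Proof.
move=> esym _ finj Hadj [y Hy] Hterm c [Hu Hall Hcyc Hsz].
pose R := fun a b => cycle_edge c (f a) (f b).
have HRe : forall a b, R a b = (next c (f a) == f b) || (f b == prev c (f a)).
  move=> a b; rewrite /R /cycle_edge !Hall /=; congr orb.
  apply/eqP/eqP => [<-|->]; [by rewrite prev_next | by rewrite next_prev].
apply: (comb (R := R)).
- by move=> a b; rewrite /R /cycle_edge !Hall /= orbC.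
- move=> a b; rewrite HRe -Hadj => /orP [/eqP <-|/eqP ->].
    exact: next_cycle Hcyc (Hall _).
  by rewrite esym; exact: prev_cycle Hcyc (Hall _).
- move=> a s Hs HRs.
  rewrite -(size_map f).
  apply: (@leq_trans (size [:: next c (f a); prev c (f a)])) => //.
  apply: uniq_leq_size; first by rewrite map_inj_uniq.
  move=> z /mapP [b Hb ->]; have := allP HRs b Hb; rewrite HRe !inE.
  by case/orP => /eqP ->; rewrite eqxx ?orbT.
- move=> a Hnt.
  have eu : e (f a) (next c (f a)) := next_cycle Hcyc (Hall _).
  have ev : e (f a) (prev c (f a)) by rewrite esym; exact: prev_cycle Hcyc (Hall _).
  have /codomP [b1 E1] : next c (f a) \in codom f.
    by apply/negPn/negP => H; move: Hnt; rewrite (Hterm a _ H eu).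
  have /codomP [b2 E2] : prev c (f a) \in codom f.
    by apply/negPn/negP => H; move: Hnt; rewrite (Hterm a _ H ev).
  exists b1, b2; split.
  + apply/eqP => E; have := next_neq_prev Hu Hsz (Hall (f a)).
    by rewrite E1 E2 E eqxx.
  + by rewrite HRe E1 eqxx.
  + by rewrite HRe E2 eqxx orbT.
- move=> W HW0 HW.
  have Hcl : forall z, z \in c -> z \in map f W -> next c z \in map f W.
    move=> z _ /mapP [a Ha ->].
    have [b1 [b2 [Hb1 Hb2 Hne R1 R2]]] := HW a Ha.
    move: R1 R2; rewrite !HRe => /orP [/eqP -> _|/eqP E1]; first exact: map_f.
    case/orP => [/eqP -> |/eqP E2]; first exact: map_f.
    by move: Hne; rewrite -E2 in E1; rewrite (finj _ _ E1) eqxx.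
  case: W HW0 HW Hcl => [//|a0 W] _ _ Hcl.
  have := next_closed Hu Hcl (Hall (f a0)) (map_f _ (mem_head _ _)) (Hall y).
  case/mapP => x _ Ey; move: Hy; rewrite Ey.
  by move/negP; apply; apply: codom_f.
Qed.
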